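(* Let $X$ be a transitive BE-algebra, $k\in(-1,0]$, and $(X,f)$ an $N$-structure on $X$. For $t\in[-1,0)$ let $[f]_t=\{x\in X: f(x)\le t\}\cup\{x\in X: f(x)+t+k+1\le 0\}$. Then $(X,f)$ is an $([e],[e]\vee[c_k])$-ideal of $X$ if and only if for every $t\in[-1,0)$ the set $[f]_t$ is either empty or an ideal of $X$.
   Context: A BE-algebra is a set $X$ with a binary operation $*$ and a distinguished element $1$ such that for all $x,y,z\in X$: $x*x=1$, $x*1=1$, $1*x=x$, and $x*(y*z)=y*(x*z)$. Write $x\le y$ iff $x*y=1$. A BE-algebra is transitive if $y*z\le(x*y)*(x*z)$ for all $x,y,z\in X$. An ideal of $X$ is a nonempty subset $I\subseteq X$ such that $x*s\in I$ for all $x\in X$, $s\in I$, and $(s*(q*x))*x\in I$ for all $x\in X$ and $s,q\in I$. An $N$-structure on $X$ is a pair $(X,f)$ where $f:X\to[-1,0]$ is any function. Fix $k\in(-1,0]$. For $x\in X$ and $t\in[-1,0)$, write $\frac{x}{t}[e]f$ if $f(x)\le t$, and $\frac{x}{t}[c_k]f$ if $f(x)+t+k+1<0$; write $\frac{x}{t}([e]\vee[c_k])f$ if at least one of these holds. The $N$-structure $(X,f)$ is an $([e],[e]\vee[c_k])$-ideal of $X$ if for all $x,y,z\in X$ and all $t,r\in[-1,0)$: (i) $f(y)\le t$ implies $\frac{x*y}{t}([e]\vee[c_k])f$; (ii) $f(x)\le t$ and $f(y)\le r$ together imply $\frac{(x*(y*z))*z}{\max\{t,r\}}([e]\vee[c_k])f$.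 *)

(* Defs.v *)
From Stdlib Require Import Reals.
Open Scope R_scope.

Definition BE_algebra {X : Type} (op : X -> X -> X) (one : X) : Prop :=
  (forall x, op x x = one) /\
  (forall x, op x one = one) /\
  (forall x, op one x = x) /\
  (forall x y z, op x (op y z) = op y (op x z)).

Definition BE_le {X : Type} (op : X -> X -> X) (one : X) (x y : X) : Prop :=
  op x y = one.

Definition BE_transitive {X : Type} (op : X -> X -> X) (one : X) : Prop :=
  forall x y z, BE_le op one (op y z) (op (op x y) (op x z)).

Definition BE_ideal {X : Type} (op : X -> X -> X) (I : X -> Prop) : Prop :=
  (exists s, I s) /\
  (forall x s, I s -> I (op x s)) /\
  (forall x s q, I s -> I q -> I (op (op s (op q x)) x)).

Definition N_structure {X : Type} (f : X -> R) : Prop :=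
  forall x, -1 <= f x <= 0.

Definition pt_e {X : Type} (f : X -> R) (x : X) (t : R) : Prop := f x <= t.
Definition pt_ck {X : Type} (k : R) (f : X -> R) (x : X) (t : R) : Prop :=
  f x + t + k + 1 < 0.
Definition pt_e_or_ck {X : Type} (k : R) (f : X -> R) (x : X) (t : R) : Prop :=
  pt_e f x t \/ pt_ck k f x t.

Definition e_eck_ideal {X : Type} (op : X -> X -> X) (k : R) (f : X -> R) : Prop :=
  forall (x y z : X) (t r : R), -1 <= t < 0 -> -1 <= r < 0 ->
    (f y <= t -> pt_e_or_ck k f (op x y) t) /\
    (f x <= t -> f y <= r -> pt_e_or_ck k f (op (op x (op y z)) z) (Rmax t r)).

Definition level_set {X : Type} (k : R) (f : X -> R) (t : R) : X -> Prop :=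
  fun x => f x <= t \/ f x + t + k + 1 <= 0.

(* Main.v *)
Require Import Defs.
From Stdlib Require Import Reals Lra Classical.
Open Scope R_scope.

Theorem mainTheorem12 (X : Type) (op : X -> X -> X) (one : X)
  (HBE : BE_algebra op one) (Htr : BE_transitive op one)
  (k : R) (Hk : -1 < k <= 0) (f : X -> R) (Hf : N_structure f) :
  e_eck_ideal op k f <->
  (forall t : R, -1 <= t < 0 ->
     (forall x, ~ level_set k f t x) \/ BE_ideal op (level_set k f t)).
Proof.
  unfold e_eck_ideal, BE_ideal, level_set, N_structure, pt_e_or_ck, pt_e, pt_ck in *.
  split.
  - intros H t Ht.
    destruct (classic (exists s, f s <= t \/ f s + t + k + 1 <= 0)) as [Hne|Hne];
      [right | left; intros x Hx; apply Hne; exists x; exact Hx].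
    destruct (Rle_dec 0 (-t-k-1)) as [Hp|Hp].
    + split; [exact Hne|].
      split.
      * intros x s _. right. specialize (Hf (op x s)). lra.
      * intros x s q _ _. right. specialize (Hf (op (op s (op q x)) x)). lra.
    + set (m := Rmax t (-t-k-1)).
      assert (Hm1 : t <= m) by apply Rmax_l.
      assert (Hm2 : -t-k-1 <= m) by apply Rmax_r.
      assert (Hm3 : m = t \/ m = -t-k-1).
      { unfold m, Rmax; destruct (Rle_dec t (-t-k-1)); auto. }
      assert (Hmr : -1 <= m < 0) by (destruct Hm3; lra).
      assert (Hin : forall u, f u <= t \/ f u + t + k + 1 <= 0 -> f u <= m)
        by (intros u [Hu|Hu]; lra).
      assert (Hout : forall w, f w <= m \/ f w + m + k + 1 < 0 ->
                      f w <= t \/ f w + t + k + 1 <= 0)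
        by (intros w [Hw|Hw]; destruct Hm3 as [E|E]; rewrite E in Hw; lra).
      split; [exact Hne|]. split.
      * intros x s Hs. apply Hout.
        destruct (H x s s m m Hmr Hmr) as [H1 _]. apply H1, Hin, Hs.
      * intros x s q Hs Hq. apply Hout.
        destruct (H s q x m m Hmr Hmr) as [_ H2].
        rewrite Rmax_left in H2 by lra. apply H2; apply Hin; assumption.
  - intros H.
    assert (Key : forall v t, -1 <= t < 0 ->
      (forall t2, t <= t2 < 0 -> f v <= t2 \/ f v + t2 + k + 1 <= 0) ->
      f v <= t \/ f v + t + k + 1 < 0).
    { intros v t Ht L.
      destruct (Rle_dec (f v) t) as [A|A]; [left; exact A|].
      destruct (Rlt_dec (f v + t + k + 1) 0) as [B|B]; [right; exact B|].
      exfalso. specialize (Hf v).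
      destruct (L ((t + f v)/2)) as [C|C]; lra. }
    intros x y z t r Ht Hr. split.
    + intros Hy. apply Key; [exact Ht|]. intros t2 Ht2.
      assert (Hy2 : f y <= t2 \/ f y + t2 + k + 1 <= 0) by (left; lra).
      destruct (H t2 ltac:(lra)) as [E|[_ [I1 _]]].
      * exfalso; exact (E y Hy2).
      * apply I1; exact Hy2.
    + intros Hx Hy.
      assert (Hm : -1 <= Rmax t r < 0).
      { unfold Rmax; destruct (Rle_dec t r); lra. }
      assert (Hm1 : t <= Rmax t r) by apply Rmax_l.
      assert (Hm2 : r <= Rmax t r) by apply Rmax_r.
      apply Key; [exact Hm|]. intros t2 Ht2.
      assert (Hx2 : f x <= t2 \/ f x + t2 + k + 1 <= 0) by (left; lra).
      assert (Hy2 : f y <= t2 \/ f y + t2 + k + 1 <= 0) by (left; lra).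
      destruct (H t2 ltac:(lra)) as [E|[_ [_ I2]]].
      * exfalso; exact (E x Hx2).
      * apply I2; assumption.
Qed.
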